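(* Let $P$ be a finite poset and let $E,F,E',F'$ be order filters of $P$. The following are equivalent: (1) $\mathcal{F}(E,F)=\mathcal{F}(E',F')$; (2) $\chi_{E'}$ and $\chi_{F'}$ are a pair of opposite (antipodal) vertices of the cube $\mathcal{F}(E,F)$; (3) $\chi_E+\chi_F=\chi_{E'}+\chi_{F'}$; (4) $E\cap F=E'\cap F'$ and $E\cup F=E'\cup F'$. In particular $\mathcal{F}(E,F)=\mathcal{F}(E\cap F,E\cup F)$, which is combinatorially a cube.
   Context: For a finite poset $P$, an order filter is a subset $F\subseteq P$ such that $a\in F$ and $a<_P b$ imply $b\in F$; $\chi_S\in\{0,1\}^P$ denotes the characteristic vector of $S\subseteq P$. The order polytope of $P$ is $\mathcal{O}(P)=\{x\in[0,1]^P: x_a\le x_b \text{ for all } a<_P b\}=\mathrm{conv}\{\chi_F: F \text{ an order filter}\}$. For order filters $E,F$, $\mathcal{F}(E,F)$ denotes the minimal face of $\mathcal{O}(P)$ containing $\chi_E$ and $\chi_F$. For comparable filters $E\subseteq F$ it is known that $\mathcal{F}(E,F)=\chi_E+\sum_{i=1}^d[0,\chi_{P'_i}]$ where $P'_1,\dots,P'_d$ are the connected components of $P|_{F\setminus E}$, a $d$-dimensional cube; two vertices of a cube are opposite if no proper face of the cube contains both. *)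

(* Defs.v *)
From HB Require Import structures.
From mathcomp Require Import all_boot all_order all_algebra.
Set Implicit Arguments. Unset Strict Implicit. Unset Printing Implicit Defensive.
Import Order.TTheory GRing.Theory Num.Theory.
Local Open Scope ring_scope.

Section OrderPolytope.
Variables (R : realFieldType) (d : Order.disp_t) (T : finPOrderType d).

Definition dotp (a x : T -> R) : R := \sum_(i : T) a i * x i.

Definition order_filter (F : {set T}) : Prop :=
  forall a b : T, a \in F -> (a < b)%O -> b \in F.

Definition chi (S : {set T}) : T -> R := fun i => if i \in S then 1 else 0.

Definition order_polytope (x : T -> R) : Prop :=
  (forall a, 0 <= x a <= 1) /\ (forall a b : T, (a < b)%O -> x a <= x b).

Definition face_of (Q G : (T -> R) -> Prop) : Prop :=
  exists (a : T -> R) (b : R),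
    (forall x, Q x -> dotp a x <= b) /\
    (forall x, G x <-> (Q x /\ dotp a x = b)).

Definition min_face (E F : {set T}) (x : T -> R) : Prop :=
  forall G, face_of order_polytope G -> G (chi E) -> G (chi F) -> G x.

Definition opposite_vertices (Q : (T -> R) -> Prop) (p q : T -> R) : Prop :=
  face_of Q (fun x => x = p) /\ face_of Q (fun x => x = q) /\
  forall G, face_of Q G -> G p -> G q -> forall x, Q x -> G x.

End OrderPolytope.

(* Main.v *)
Require Import Defs.
From HB Require Import structures.
From mathcomp Require Import all_boot all_order all_algebra.
From mathcomp Require Import lra.
From Stdlib Require Import FunctionalExtensionality.
Import Order.TTheory GRing.Theory Num.Theory.
Local Open Scope ring_scope.

Set Implicit Arguments. Unset Strict Implicit.
Section Aux.
Variables (R : realFieldType) (d : Order.disp_t) (T : finPOrderType d).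
Local Notation O := (@order_polytope R d T).

Lemma dotp_refl (c p q y : T -> R) :
  dotp c (fun i => p i + q i - y i) = dotp c p + dotp c q - dotp c y.
Proof.
rewrite /dotp -big_split -sumrB /=; apply: eq_bigr => i _.
by rewrite mulrBr mulrDr.
Qed.

Lemma dotp_delta i (x : T -> R) : dotp (fun j => (j == i)%:R) x = x i.
Proof.
rewrite /dotp (bigD1 i) //= eqxx mul1r big1 ?addr0 // => j /negbTE ->.
by rewrite mul0r.
Qed.

Lemma dotp_ndelta i (x : T -> R) : dotp (fun j => - (j == i)%:R) x = - x i.
Proof.
rewrite -dotp_delta /dotp -sumrN; apply: eq_bigr => j _; by rewrite mulNr.
Qed.

Lemma dotp_ddelta a b (x : T -> R) :
  dotp (fun j => (j == a)%:R - (j == b)%:R) x = x a - x b.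
Proof.
rewrite -!dotp_delta /dotp -sumrB; apply: eq_bigr => j _; by rewrite mulrBl.
Qed.

Lemma dotp0 (x : T -> R) : dotp (fun _ => 0) x = 0.
Proof. by rewrite /dotp big1 // => i _; rewrite mul0r. Qed.

Lemma chi_O S : order_filter S -> O (chi R S).
Proof.
move=> hS; split.
  move=> a; rewrite /chi; case: (a \in S); by rewrite ?lexx ?ler01.
move=> a b hab; rewrite /chi; case aS: (a \in S).
  by rewrite (hS a b aS hab).
by case: (b \in S); rewrite ?lexx ?ler01.
Qed.

Lemma face_O (c : T -> R) v :
  (forall x, O x -> dotp c x <= v) -> face_of O (fun x => O x /\ dotp c x = v).
Proof. by move=> Hv; exists c, v; split. Qed.

Lemma face_Q (Q : (T -> R) -> Prop) (c : T -> R) v :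
  (forall x, Q x -> O x) ->
  (forall x, O x -> dotp c x <= v) -> face_of Q (fun x => Q x /\ dotp c x = v).
Proof. by move=> HQ Hv; exists c, v; split => // x Qx; apply: Hv; apply: HQ. Qed.

Section Filters.
Variables (E F : {set T}) (hE : order_filter E) (hF : order_filter F).

Lemma mf_dot (x : T -> R) (c : T -> R) v : min_face E F x ->
  (forall y, O y -> dotp c y <= v) -> dotp c (chi R E) = v -> dotp c (chi R F) = v ->
  dotp c x = v.
Proof.
move=> Hx Hv cE cF.
have [] := Hx _ (face_O Hv) (conj (chi_O hE) cE) (conj (chi_O hF) cF) => //.
Qed.

Lemma min_face_O (x : T -> R) : min_face E F x -> O x.
Proof.
move=> Hx; apply: (Hx O) => //; [|exact: chi_O|exact: chi_O].
exists (fun _ => 0), 0; split; first by move=> y _; rewrite dotp0.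
by move=> y; rewrite dotp0; split => [|[]].
Qed.

Lemma mf_self1 : @min_face R d T E F (chi R E). Proof. by move=> G _ GE _. Qed.
Lemma mf_self2 : @min_face R d T E F (chi R F). Proof. by move=> G _ _ GF. Qed.

Lemma mf_one (x : T -> R) i : min_face E F x -> i \in E -> i \in F -> x i = 1.
Proof.
move=> Hx iE iF; rewrite -(dotp_delta i x); apply: (mf_dot Hx).
- by move=> y [Hy _]; rewrite dotp_delta; case/andP: (Hy i).
- by rewrite dotp_delta /chi iE.
- by rewrite dotp_delta /chi iF.
Qed.

Lemma mf_zero (x : T -> R) i : min_face E F x -> i \notin E -> i \notin F -> x i = 0.
Proof.
move=> Hx iE iF; apply: oppr_inj; rewrite oppr0 -(dotp_ndelta i x).
apply: (mf_dot Hx).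
- by move=> y [Hy _]; rewrite dotp_ndelta oppr_le0; case/andP: (Hy i).
- by rewrite dotp_ndelta /chi (negbTE iE) oppr0.
- by rewrite dotp_ndelta /chi (negbTE iF) oppr0.
Qed.

Lemma mf_eq (x : T -> R) a b : min_face E F x -> (a < b)%O ->
  (a \in E) = (b \in E) -> (a \in F) = (b \in F) -> x a = x b.
Proof.
move=> Hx hab eE eF; apply: subr0_eq; rewrite -(dotp_ddelta a b x).
apply: (mf_dot Hx).
- by move=> y [_ Hy]; rewrite dotp_ddelta subr_le0; apply: Hy.
- by rewrite dotp_ddelta /chi eE subrr.
- by rewrite dotp_ddelta /chi eF subrr.
Qed.

Lemma reflect_mf (x : T -> R) : min_face E F x ->
  min_face E F (fun i => chi R E i + chi R F i - x i).
Proof.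
move=> Hx G [c [v [Hv HG]]] GE GF.
have Ox := min_face_O Hx.
apply/HG; split.
  split.
    move=> i; have /andP[x0 x1] := Ox.1 i.
    case iE: (i \in E); case iF: (i \in F).
    - by rewrite (mf_one Hx iE iF) /chi iE iF; apply/andP; split; lra.
    - by rewrite /chi iE iF; apply/andP; split; lra.
    - by rewrite /chi iE iF; apply/andP; split; lra.
    - by rewrite (mf_zero Hx (negbT iE) (negbT iF)) /chi iE iF; apply/andP; split; lra.
  move=> a b hab /=.
  have /andP[xa0 xa1] := Ox.1 a; have /andP[xb0 xb1] := Ox.1 b.
  have xab := Ox.2 a b hab.
  have Eab := (chi_O hE).2 a b hab; have Fab := (chi_O hF).2 a b hab.
  move: Eab Fab; rewrite /chi.
  case aE: (a \in E); case bE: (b \in E); case aF: (a \in F); case bF: (b \in F)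
    => Eab Fab;
  first [ lra | (have := mf_eq Hx hab (etrans aE (esym bE)) (etrans aF (esym bF))); lra ].
have [_ cE] := (HG _).1 GE; have [_ cF] := (HG _).1 GF.
have [_ cx] := (HG _).1 (Hx G (ex_intro _ c (ex_intro _ v (conj Hv HG))) GE GF).
by rewrite dotp_refl cE cF cx; lra.
Qed.

End Filters.

Lemma face_sum (E F E' F' : {set T}) :
  order_filter E -> order_filter F -> order_filter E' -> order_filter F' ->
  (forall i, chi R E i + chi R F i = chi R E' i + chi R F' i) ->
  forall G, face_of O G -> G (chi R E') -> G (chi R F') -> G (chi R E) /\ G (chi R F).
Proof.
move=> hE hF hE' hF' Hs G [c [v [Hv HG]]] GE' GF'.
have [_ c1] := (HG _).1 GE'; have [_ c2] := (HG _).1 GF'.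
have h1 := Hv _ (chi_O hE); have h2 := Hv _ (chi_O hF).
have hs : dotp c (chi R E) + dotp c (chi R F) = dotp c (chi R E') + dotp c (chi R F').
  rewrite /dotp -!big_split /=; apply: eq_bigr => i _; by rewrite -!mulrDr Hs.
split; apply/HG; split; try exact: chi_O; lra.
Qed.

Lemma sum_min (E F E' F' : {set T}) :
  order_filter E -> order_filter F -> order_filter E' -> order_filter F' ->
  (forall i, chi R E i + chi R F i = chi R E' i + chi R F' i) ->
  forall x : T -> R, min_face E F x <-> min_face E' F' x.
Proof.
move=> hE hF hE' hF' Hs x; split => Hx G Gf G1 G2.
  by have [] := face_sum hE hF hE' hF' Hs Gf G1 G2; apply: Hx.
have Hs' : forall i, chi R E' i + chi R F' i = chi R E i + chi R F i by move=> i; rewrite Hs.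
by have [] := face_sum hE' hF' hE hF Hs' Gf G1 G2; apply: Hx.
Qed.



Lemma sum_le_eq (f g : T -> R) :
  (forall i, f i <= g i) -> \sum_i f i = \sum_i g i -> forall i, f i = g i.
Proof.
move=> Hle Hs i.
have H0 : \sum_i (g i - f i) = 0 by rewrite sumrB Hs subrr.
have Hp : forall j, predT j -> 0 <= g j - f j by move=> j _; rewrite subr_ge0.
by have := psumr_eq0P Hp H0 (i:=i) isT => /subr0_eq ->.
Qed.

Lemma vertex_face (Q : (T -> R) -> Prop) S :
  (forall x, Q x -> O x) -> Q (chi R S) -> face_of Q (fun x => x = chi R S).
Proof.
move=> HQ QS.
pose c := fun i : T => if i \in S then 1 else -1 : R.
have Hle : forall x, O x -> forall i, c i * x i <= c i * chi R S i.
  move=> x Ox i; have /andP[x0 x1] := Ox.1 i.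
  rewrite /c /chi; case: (i \in S); rewrite ?mul1r ?mulN1r ?mulr1 ?mulr0; lra.
exists c, (dotp c (chi R S)); split.
  by move=> x Qx; apply: ler_sum => i _; apply: Hle; apply: HQ.
move=> x; split; first by move=> ->.
move=> [Qx Hd]; apply: functional_extensionality => i.
have := sum_le_eq (Hle _ (HQ _ Qx)) Hd i.
rewrite /c /chi; case: (i \in S); rewrite ?mul1r ?mulN1r ?mulr1 ?mulr0; lra.
Qed.

End Aux.
Unset Implicit Arguments.

Theorem corollary3p2 (R : realFieldType) (d : Order.disp_t) (T : finPOrderType d)
    (E F E' F' : {set T})
    (hE : order_filter E) (hF : order_filter F)
    (hE' : order_filter E') (hF' : order_filter F') :
  [<-> (forall x : T -> R, min_face E F x <-> min_face E' F' x);
       opposite_vertices (min_face E F) (chi R E') (chi R F');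
       (forall i : T, chi R E i + chi R F i = chi R E' i + chi R F' i);
       E :&: F = E' :&: F' /\ E :|: F = E' :|: F']
  /\ (forall x : T -> R, min_face E F x <-> min_face (E :&: F) (E :|: F) x).
Proof.
have hI : order_filter (E :&: F).
  move=> a b; rewrite !inE => /andP[aE aF] hab.
  by rewrite (hE _ _ aE hab) (hF _ _ aF hab).
have hU : order_filter (E :|: F).
  move=> a b; rewrite !inE => /orP[aE|aF] hab.
    by rewrite (hE _ _ aE hab).
  by rewrite (hF _ _ aF hab) orbT.
split; last first.
  apply: sum_min => // i; rewrite /chi !inE.
  by case: (i \in E); case: (i \in F) => /=; rewrite ?addr0 ?add0r ?addrC.
have QO : forall x : T -> R, min_face E F x -> order_polytope x.
  by move=> x; apply: min_face_O.
tfae.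
-
  move=> H1; split; [|split].
  + apply: vertex_face; first exact: QO. apply: (proj2 (H1 _)); exact: mf_self1.
  + apply: vertex_face; first exact: QO. apply: (proj2 (H1 _)); exact: mf_self2.
  move=> G [c [v [Hv HG]]] GE' GF' x Qx.
  apply/HG; split => //.
  have Hz := reflect_mf hE' hF' ((H1 x).1 Qx).
  have Qz := (H1 _).2 Hz.
  have h1 := Hv _ Qz; have h2 := Hv _ Qx.
  have [_ cE] := (HG _).1 GE'; have [_ cF] := (HG _).1 GF'.
  move: h1; rewrite dotp_refl cE cF; lra.
-
  move=> [V1 [V2 Hall]].
  have QE' : min_face E F (chi R E') by case: V1 => c [v [_ HG]]; case: ((HG _).1 erefl).
  have QF' : min_face E F (chi R F') by case: V2 => c [v [_ HG]]; case: ((HG _).1 erefl).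
  move=> i.
  have A : i \in E' -> i \in F' -> (i \in E) && (i \in F).
    move=> iE iF.
    have Gf := face_Q (c := fun j => (j == i)%:R) (v := 1) QO
      (fun y Oy => ltac:(rewrite dotp_delta; by case/andP: (Oy.1 i))).
    have G1 : min_face E F (chi R E') /\ dotp (fun j => (j == i)%:R) (chi R E') = 1.
      by split => //; rewrite dotp_delta /chi iE.
    have G2 : min_face E F (chi R F') /\ dotp (fun j => (j == i)%:R) (chi R F') = 1.
      by split => //; rewrite dotp_delta /chi iF.
    have [_ e1] := Hall _ Gf G1 G2 _ (mf_self1 (R:=R) (E:=E) (F:=F)).
    have [_ e2] := Hall _ Gf G1 G2 _ (mf_self2 (R:=R) (E:=E) (F:=F)).
    move: e1 e2; rewrite !dotp_delta /chi.
    case: (i \in E); case: (i \in F) => //= h1 h2; exfalso; lra.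
  have B : i \notin E' -> i \notin F' -> (i \notin E) && (i \notin F).
    move=> iE iF.
    have Gf := face_Q (c := fun j => - (j == i)%:R) (v := 0) QO
      (fun y Oy => ltac:(rewrite dotp_ndelta oppr_le0; by case/andP: (Oy.1 i))).
    have G1 : min_face E F (chi R E') /\ dotp (fun j => - (j == i)%:R) (chi R E') = 0.
      by split => //; rewrite dotp_ndelta /chi (negbTE iE) oppr0.
    have G2 : min_face E F (chi R F') /\ dotp (fun j => - (j == i)%:R) (chi R F') = 0.
      by split => //; rewrite dotp_ndelta /chi (negbTE iF) oppr0.
    have [_ e1] := Hall _ Gf G1 G2 _ (mf_self1 (R:=R) (E:=E) (F:=F)).
    have [_ e2] := Hall _ Gf G1 G2 _ (mf_self2 (R:=R) (E:=E) (F:=F)).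
    move: e1 e2; rewrite !dotp_ndelta /chi.
    case: (i \in E); case: (i \in F) => //= h1 h2; exfalso; lra.
  have C : i \in E -> i \in F -> chi R E' i = 1 /\ chi R F' i = 1.
    by move=> iE iF; split; apply: (mf_one hE hF _ iE iF).
  have D : i \notin E -> i \notin F -> chi R E' i = 0 /\ chi R F' i = 0.
    by move=> iE iF; split; apply: (mf_zero hE hF _ iE iF).
  move: A B C D; rewrite /chi.
  case: (i \in E); case: (i \in F); case: (i \in E'); case: (i \in F') => //= A B C D;
  try (have [] := C erefl erefl); try (have [] := D erefl erefl); try lra;
  try (have := A erefl erefl; done); try (have := B erefl erefl; done).
-
  move=> Hs; split; apply/setP => i; rewrite !inE; have := Hs i; rewrite /chi;
  case: (i \in E); case: (i \in F); case: (i \in E'); case: (i \in F') => //= h;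
  exfalso; lra.
-
  move=> [HI HU]; apply: sum_min => // i.
  have h1 : (i \in E :&: F) = (i \in E' :&: F') by rewrite HI.
  have h2 : (i \in E :|: F) = (i \in E' :|: F') by rewrite HU.
  move: h1 h2; rewrite !inE /chi.
  case: (i \in E); case: (i \in F); case: (i \in E'); case: (i \in F') => //= _ _; lra.
Qed.
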